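(* (a) For all flow graphs $h_1,h_2$ over a flow monoid with $h_1.X=h_2.X$ and $h_1.\mathit{in}=h_2.\mathit{in}$: $\mathrm{FP}(h_1,h_2)\neq\emptyset$ if and only if $h_1.X\in\mathrm{FP}(h_1,h_2)$. (b) Flow footprints are not closed under intersection and need not have a unique inclusion-minimal element: there exist such flow graphs $h_1,h_2$ and sets $Y_1,Y_2\in\mathrm{FP}(h_1,h_2)$ with $Y_1\cap Y_2\notin\mathrm{FP}(h_1,h_2)$.
   Context: A flow monoid is a commutative monoid $(\mathbb{M},+,0)$ such that $n\le m :\iff \exists o.\ m=n+o$ is a partial order in which every ascending chain $K$ has a least upper bound $\bigsqcup K$, and $n+\bigsqcup K=\bigsqcup(n+K)$. $\mathcal{C}(\mathbb{M}\to\mathbb{M})$ is the set of functions commuting with least upper bounds of ascending chains. Infinite sums denote least upper bounds of finite partial sums. A flow graph is $h=(X,E,\mathit{in})$ with $X\subseteq\mathbb{N}$ finite, $E:X\times\mathbb{N}\to\mathcal{C}(\mathbb{M}\to\mathbb{M})$, $\mathit{in}:(\mathbb{N}\setminus X)\times X\to\mathbb{M}$; $\mathit{in}_x=\sum_{y\in\mathbb{N}\setminus X}\mathit{in}(y,x)$; the flow $h.\mathit{flow}$ is the least $\mathit{flow}:X\to\mathbb{M}$ with $\mathit{flow}(x)=\mathit{in}_x+\sum_{y\in X}E(y,x)(\mathit{flow}(y))$; the outflow is $h.\mathit{out}(x,y)=E(x,y)(h.\mathit{flow}(x))$ for $x\in X$, $y\notin X$. Transfer function: $\mathsf{tf}(h)(\mathit{in}')$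 is the outflow of $(X,E,\mathit{in}')$. $\mathsf{tf}(h_1)=_{\mathit{in}}\mathsf{tf}(h_2)$ means equality on all inflows $\mathit{in}'\le\mathit{in}$ (pointwise). Contextual equivalence $h_1\approx h_2$: $h_1.X=h_2.X$, $h_1.\mathit{in}=h_2.\mathit{in}$, $\mathsf{tf}(h_1)=_{h_1.\mathit{in}}\mathsf{tf}(h_2)$. Restriction: for $Y\subseteq\mathbb{N}$, $h|_Y=(X\cap Y,\ E|_{(X\cap Y)\times\mathbb{N}},\ \mathit{in}')$ with $\mathit{in}'(z,y)=\mathit{in}(z,y)$ for $z\notin X$, $y\in X\cap Y$, and $\mathit{in}'(x,y)=E(x,y)(h.\mathit{flow}(x))$ for $x\in X\setminus Y$, $y\in X\cap Y$. Footprints: for $h_1,h_2$ with $X=h_1.X=h_2.X$ and $h_1.\mathit{in}=h_2.\mathit{in}$, $\mathrm{FP}(h_1,h_2)$ is the set of $Y\subseteq X$ such that $h_1|_Y\approx h_2|_Y$ and $h_1|_{X\setminus Y}=h_2|_{X\setminus Y}$. *)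

(* Defs.v *)
From Stdlib Require Import ClassicalEpsilon.
From mathcomp Require Import all_boot.
From mathcomp Require Import finmap.
Set Implicit Arguments. Unset Strict Implicit. Unset Printing Implicit Defensive.
Local Open Scope fset_scope.

Definition mle {T : Type} (add : T -> T -> T) (n m : T) : Prop :=
  exists o, m = add n o.

Definition is_chain {T : Type} (add : T -> T -> T) (K : T -> Prop) : Prop :=
  (exists k, K k) /\ (forall a b, K a -> K b -> mle add a b \/ mle add b a).

Definition is_lub {T : Type} (add : T -> T -> T) (K : T -> Prop) (l : T) : Prop :=
  (forall k, K k -> mle add k l) /\
  (forall u, (forall k, K k -> mle add k u) -> mle add l u).

Definition img {T U : Type} (f : T -> U) (K : T -> Prop) : U -> Prop :=
  fun y => exists x, K x /\ y = f x.

Record flow_monoid := FlowMonoid {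
  fm_car :> Type;
  fm_add : fm_car -> fm_car -> fm_car;
  fm_zero : fm_car;
  fm_addA : forall a b c, fm_add a (fm_add b c) = fm_add (fm_add a b) c;
  fm_addC : forall a b, fm_add a b = fm_add b a;
  fm_add0 : forall a, fm_add fm_zero a = a;
  (* mle is a partial order (reflexivity/transitivity are automatic) *)
  fm_le_antisym : forall a b, mle fm_add a b -> mle fm_add b a -> a = b;
  fm_chain_lub : forall K, is_chain fm_add K -> exists l, is_lub fm_add K l;
  fm_add_lub : forall n K l, is_chain fm_add K -> is_lub fm_add K l ->
                 is_lub fm_add (img (fm_add n) K) (fm_add n l)
}.

Section FlowDefs.
Variable M : flow_monoid.

Definition madd : M -> M -> M := @fm_add M.
Definition mzero : M := @fm_zero M.
Definition le (a b : M) : Prop := mle madd a b.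

Definition chain_continuous (f : M -> M) : Prop :=
  forall K l, is_chain madd K -> is_lub madd K l -> is_lub madd (img f K) (f l).

Definition fsum (s : seq nat) (f : nat -> M) : M :=
  foldr (fun y acc => madd (f y) acc) mzero s.

Definition isum (P : pred nat) (f : nat -> M) : M :=
  epsilon (inhabits mzero)
    (fun l => is_lub madd (fun s => exists n, s = fsum [seq y <- iota 0 n | P y] f) l).

(* E and inf are total functions; only E on X x N and inf on (N\X) x X matter. *)
Record flow_graph := FlowGraph {
  fg_X : {fset nat};
  fg_E : nat -> nat -> M -> M;
  fg_in : nat -> nat -> M
}.

(* E : X x N -> C(M -> M) *)
Definition wf (h : flow_graph) : Prop :=
  forall x y, x \in fg_X h -> chain_continuous (fg_E h x y).

Definition inflow (h : flow_graph) (x : nat) : M :=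
  isum (fun y => y \notin fg_X h) (fun y => fg_in h y x).

Definition is_flow (h : flow_graph) (f : nat -> M) : Prop :=
  forall x, x \in fg_X h ->
    f x = madd (inflow h x) (fsum (enum_fset (fg_X h)) (fun y => fg_E h y x (f y))).

Definition is_least_flow (h : flow_graph) (f : nat -> M) : Prop :=
  is_flow h f /\
  forall g, is_flow h g -> forall x, x \in fg_X h -> le (f x) (g x).

(* h.flow : the least solution (only its values on X are meaningful) *)
Definition flow (h : flow_graph) : nat -> M :=
  epsilon (inhabits (fun _ => mzero)) (is_least_flow h).

Definition outflow (h : flow_graph) (x y : nat) : M := fg_E h x y (flow h x).

Definition tf (h : flow_graph) (inf' : nat -> nat -> M) : nat -> nat -> M :=
  outflow (FlowGraph (fg_X h) (fg_E h) inf').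

Definition in_eq (X : {fset nat}) (i1 i2 : nat -> nat -> M) : Prop :=
  forall y x, y \notin X -> x \in X -> i1 y x = i2 y x.

Definition tf_eq_on (X : {fset nat}) (inf : nat -> nat -> M) (h1 h2 : flow_graph) : Prop :=
  forall inf' : nat -> nat -> M,
    (forall y x, y \notin X -> x \in X -> le (inf' y x) (inf y x)) ->
    forall x y, x \in X -> y \notin X -> tf h1 inf' x y = tf h2 inf' x y.

Definition ctx_equiv (h1 h2 : flow_graph) : Prop :=
  fg_X h1 = fg_X h2 /\ in_eq (fg_X h1) (fg_in h1) (fg_in h2) /\
  tf_eq_on (fg_X h1) (fg_in h1) h1 h2.

Definition fg_eq (h1 h2 : flow_graph) : Prop :=
  fg_X h1 = fg_X h2 /\
  (forall x y, x \in fg_X h1 -> fg_E h1 x y = fg_E h2 x y) /\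
  in_eq (fg_X h1) (fg_in h1) (fg_in h2).

Definition restrict (h : flow_graph) (Y : {fset nat}) : flow_graph :=
  FlowGraph (fg_X h `&` Y) (fg_E h)
    (fun z y => if z \in fg_X h then fg_E h z y (flow h z) else fg_in h z y).

Definition FP (h1 h2 : flow_graph) (Y : {fset nat}) : Prop :=
  Y `<=` fg_X h1 /\
  ctx_equiv (restrict h1 Y) (restrict h2 Y) /\
  fg_eq (restrict h1 (fg_X h1 `\` Y)) (restrict h2 (fg_X h1 `\` Y)).

End FlowDefs.

(* Main.v *)
From HB Require Import structures.
Require Import Defs.
From Stdlib Require Import ClassicalEpsilon Classical.
From mathcomp Require Import all_boot finmap.
Set Implicit Arguments. Unset Strict Implicit. Unset Printing Implicit Defensive.
Local Open Scope fset_scope.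
Section Gen.
Variable M : flow_monoid.

Lemma maddA : associative (@madd M). Proof. move=> a b c; exact: fm_addA. Qed.
Lemma maddC : commutative (@madd M). Proof. move=> a b; exact: fm_addC. Qed.
Lemma add0m : left_id (mzero M) (@madd M). Proof. move=> a; exact: fm_add0. Qed.
Lemma addm0 : right_id (mzero M) (@madd M). Proof. by move=> a; rewrite maddC add0m. Qed.
HB.instance Definition _ := Monoid.isComLaw.Build (fm_car M) (mzero M) (@madd M) maddA maddC add0m.

Lemma fsumE (s : seq nat) f : fsum s f = \big[@madd M/mzero M]_(y <- s) f y.
Proof. by elim: s => [|x s IH]; rewrite ?big_nil ?big_cons //= IH. Qed.

Lemma le_refl (a : M) : le a a. Proof. by exists (mzero M); rewrite addm0. Qed.
Lemma le_trans (a b c : M) : le a b -> le b c -> le a c.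
Proof. by move=> [o ->] [o' ->]; exists (madd o o'); rewrite maddA. Qed.
Lemma le_antisym (a b : M) : le a b -> le b a -> a = b.
Proof. exact: fm_le_antisym. Qed.
Lemma le0 (a : M) : le (mzero M) a. Proof. by exists a; rewrite add0m. Qed.
Lemma le_add (a b c d : M) : le a b -> le c d -> le (madd a c) (madd b d).
Proof.
move=> [o ->] [o' ->]; exists (madd o o').
by rewrite -!maddA; congr madd; rewrite [madd o _]maddC -maddA [madd o' o]maddC.
Qed.
Lemma le_addr (a b : M) : le a (madd a b). Proof. by exists b. Qed.
Lemma le_addl (a b : M) : le a (madd b a). Proof. by exists b; rewrite maddC. Qed.

Lemma lub_unique K (l l' : M) : is_lub (@madd M) K l -> is_lub (@madd M) K l' -> l = l'.
Proof. move=> [H1 H2] [H1' H2']; apply: le_antisym; [exact: H2 | exact: H2']. Qed.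

Definition rng (a : nat -> M) : M -> Prop := fun v => exists n, v = a n.
Definition slub (a : nat -> M) l := is_lub (@madd M) (rng a) l.
Definition incr (a : nat -> M) := forall n, le (a n) (a n.+1).

Lemma incr_le (a : nat -> M) n m : incr a -> n <= m -> le (a n) (a m).
Proof.
move=> Ha; elim: m => [|m IH]; first by rewrite leqn0 => /eqP ->; exact: le_refl.
rewrite leq_eqVlt => /orP [/eqP -> | Hlt]; first exact: le_refl.
exact: le_trans (IH Hlt) (Ha m).
Qed.

Lemma incr_chain (a : nat -> M) : incr a -> is_chain (@madd M) (rng a).
Proof.
move=> Ha; split; first by exists (a 0), 0.
move=> _ _ [n ->] [m ->]; case: (leqP n m) => H.
  by left; apply: incr_le.
by right; apply: incr_le => //; apply: ltnW.
Qed.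

Lemma slub_ex (a : nat -> M) : incr a -> exists l, slub a l.
Proof. by move=> /incr_chain /fm_chain_lub. Qed.

Lemma slub_ub (a : nat -> M) l n : slub a l -> le (a n) l.
Proof. by move=> [H _]; apply: H; exists n. Qed.
Lemma slub_least (a : nat -> M) l u : slub a l -> (forall n, le (a n) u) -> le l u.
Proof. by move=> [_ H] Hu; apply: H => _ [n ->]; apply: Hu. Qed.
Lemma slubI (a : nat -> M) l : (forall n, le (a n) l) -> (forall u, (forall n, le (a n) u) -> le l u) -> slub a l.
Proof. move=> H1 H2; split; first by move=> _ [n ->]; apply: H1. by move=> v Hv; apply: H2 => n; apply: Hv; exists n. Qed.

Lemma slub_addl (c : M) (a : nat -> M) l : incr a -> slub a l -> slub (fun n => madd c (a n)) (madd c l).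
Proof.
move=> Ha Hl; have := fm_add_lub c (incr_chain Ha) Hl.
move=> [H1 H2]; apply: slubI.
  by move=> n; apply: H1; exists (a n); split => //; exists n.
by move=> u Hu; apply: H2 => _ [_ [[n ->] ->]]; apply: Hu.
Qed.

Lemma slub_add (a b : nat -> M) A B : incr a -> incr b -> slub a A -> slub b B ->
  slub (fun n => madd (a n) (b n)) (madd A B).
Proof.
move=> Ha Hb HA HB; apply: slubI.
  by move=> n; apply: le_add; [apply: slub_ub HA | apply: slub_ub HB].
move=> u Hu.
have Hm : forall m, le (madd (a m) B) u.
  move=> m; apply: slub_least (slub_addl (a m) Hb HB) _ => n.
  apply: le_trans (Hu (maxn m n)).
  by apply: le_add; apply: incr_le => //; rewrite ?leq_maxl ?leq_maxr.
have HB' : incr (fun m => madd B (a m)).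
  by move=> m; apply: le_add; [apply: le_refl | apply: Ha].
rewrite maddC; apply: slub_least (slub_addl B Ha HA) _ => m.
by rewrite maddC; apply: Hm.
Qed.

Lemma slub_ev (a : nat -> M) c N : incr a -> (forall n, N <= n -> a n = c) -> slub a c.
Proof.
move=> Ha Hc; apply: slubI.
  move=> n; rewrite -(Hc (maxn n N)) ?leq_maxr //; apply: incr_le => //; exact: leq_maxl.
by move=> u Hu; rewrite -(Hc N) //.
Qed.

Lemma slub_shift (a : nat -> M) l : incr a -> slub a l -> slub (fun n => a n.+1) l.
Proof.
move=> Ha Hl; apply: slubI; first by move=> n; apply: slub_ub Hl.
move=> u Hu; apply: (slub_least Hl) => n; apply: le_trans (Hu n); exact: Ha.
Qed.

Lemma cont_mono (f : M -> M) (x y : M) : chain_continuous f -> le x y -> le (f x) (f y).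
Proof.
move=> Hf Hxy.
pose K := fun v : M => v = x \/ v = y.
have HK : is_chain (@madd M) K.
  split; first by exists x; left.
  move=> u v [->|->] [->|->]; by [left; exact: le_refl | left | right | left; exact: le_refl].
have Hl : is_lub (@madd M) K y.
  by split; [move=> k [->|->] //; exact: le_refl | move=> u Hu; apply: Hu; right].
have [H1 _] := Hf _ _ HK Hl.
by apply: H1; exists x; split => //; left.
Qed.

Lemma slub_cont (f : M -> M) (a : nat -> M) l : chain_continuous f -> incr a -> slub a l -> slub (fun n => f (a n)) (f l).
Proof.
move=> Hf Ha Hl; have [H1 H2] := Hf _ _ (incr_chain Ha) Hl.
apply: slubI; first by move=> n; apply: H1; exists (a n); split => //; exists n.
by move=> u Hu; apply: H2 => _ [_ [[n ->] ->]]; apply: Hu.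
Qed.


Local Notation MS := (@madd M).
Local Notation Z0 := (mzero M).

Lemma slub_eq (a a' : nat -> M) l : (forall n, a n = a' n) -> slub a l -> slub a' l.
Proof.
move=> He Hl; apply: slubI; first by move=> n; rewrite -He; apply: slub_ub Hl.
by move=> u Hu; apply: (slub_least Hl) => n; rewrite He.
Qed.

Lemma big_le (s : seq nat) (F G : nat -> M) :
  (forall z, z \in s -> le (F z) (G z)) -> le (\big[MS/Z0]_(z <- s) F z) (\big[MS/Z0]_(z <- s) G z).
Proof.
move=> H; rewrite !big_seq; elim/big_rec2: _ => [|i y1 y2 Hi Hy]; first exact: le_refl.
by apply: le_add => //; apply: H.
Qed.

Lemma big_lec (s : seq nat) (P : pred nat) (F G : nat -> M) :
  (forall z, P z -> le (F z) (G z)) -> le (\big[MS/Z0]_(z <- s | P z) F z) (\big[MS/Z0]_(z <- s | P z) G z).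
Proof.
move=> H; elim/big_rec2: _ => [|i y1 y2 Hi Hy]; first exact: le_refl.
by apply: le_add => //; apply: H.
Qed.

Definition ps (P : pred nat) (f : nat -> M) n := \big[MS/Z0]_(0 <= y < n | P y) f y.

Lemma ps_incr (P : pred nat) (f : nat -> M) : incr (ps P f).
Proof.
move=> n; rewrite /ps big_mkcond [X in le _ X]big_mkcond big_nat_recr //=; exact: le_addr.
Qed.

Lemma ps_fsum (P : pred nat) (f : nat -> M) n : fsum [seq y <- iota 0 n | P y] f = ps P f n.
Proof. by rewrite fsumE big_filter /ps /index_iota subn0. Qed.

Lemma is_lub_ext (K K' : M -> Prop) l : (forall v, K v <-> K' v) -> is_lub MS K l -> is_lub MS K' l.
Proof.
move=> He [H1 H2]; split; first by move=> k /He; apply: H1.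
by move=> u Hu; apply: H2 => k /He; apply: Hu.
Qed.

Lemma isum_spec (P : pred nat) (f : nat -> M) : slub (ps P f) (isum P f).
Proof.
rewrite /isum.
set Q := (fun l => _).
have HE : forall v, (exists n, v = fsum [seq y <- iota 0 n | P y] f) <-> rng (ps P f) v.
  by move=> v; split => -[n ->]; exists n; rewrite ps_fsum.
have [l Hl] := slub_ex (ps_incr P f).
have Hq : Q l by apply: is_lub_ext Hl => v; rewrite HE.
have := epsilon_spec (inhabits Z0) Q (ex_intro _ l Hq).
by apply: is_lub_ext.
Qed.

Lemma isum_mono (P : pred nat) (f g : nat -> M) : (forall z, P z -> le (f z) (g z)) -> le (isum P f) (isum P g).
Proof.
move=> H; apply: (slub_least (isum_spec P f)) => n.
apply: le_trans (slub_ub n (isum_spec P g)).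
exact: big_lec.
Qed.

Lemma isum_ext (P : pred nat) (f g : nat -> M) : (forall z, P z -> f z = g z) -> isum P f = isum P g.
Proof.
by move=> H; apply: le_antisym; apply: isum_mono => z Pz; rewrite H //; exact: le_refl.
Qed.

Lemma fset_big_split (X Y : {fset nat}) (k : nat -> M) : Y `<=` X ->
  \big[MS/Z0]_(z <- enum_fset X) k z =
  MS (\big[MS/Z0]_(z <- enum_fset Y) k z) (\big[MS/Z0]_(z <- enum_fset (X `\` Y)) k z).
Proof.
move=> /fsubsetP HYX; rewrite -big_cat; apply: perm_big.
apply: uniq_perm; first exact: fset_uniq.
  rewrite cat_uniq !fset_uniq /= andbT; apply/hasPn => z.
  by rewrite in_fsetD => /andP [] /negbTE ->.
move=> z; rewrite mem_cat in_fsetD.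
have : z \in enum_fset X = (z \in X) by [].
have : z \in enum_fset Y = (z \in Y) by [].
move=> -> ->.
by case Hz: (z \in Y) => //=; rewrite (HYX z Hz).
Qed.

Lemma ps_ev (D : {fset nat}) (k : nat -> M) n :
  \max_(z <- enum_fset D) z.+1 <= n ->
  ps (fun z => z \in D) k n = \big[MS/Z0]_(z <- enum_fset D) k z.
Proof.
move=> Hn; rewrite /ps -big_filter; apply: perm_big.
apply: uniq_perm; first by rewrite filter_uniq // iota_uniq.
  exact: fset_uniq.
move=> z; rewrite mem_filter mem_iota /= add0n.
have -> : z \in enum_fset D = (z \in D) by [].
case HzD: (z \in D) => //=.
rewrite subn0; apply: leq_trans Hn.
by have := @leq_bigmax_seq nat (enum_fset D) xpredT (fun z => z.+1) z HzD isT.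
Qed.

Lemma isum_split (X Y : {fset nat}) (i k : nat -> M) : Y `<=` X ->
  isum (fun z => z \notin Y) (fun z => if z \in X then k z else i z) =
  MS (isum (fun z => z \notin X) i) (\big[MS/Z0]_(z <- enum_fset (X `\` Y)) k z).
Proof.
move=> HYX.
have Hps : forall n, ps (fun z => z \notin Y) (fun z => if z \in X then k z else i z) n =
   MS (ps (fun z => z \notin X) i n) (ps (fun z => z \in X `\` Y) k n).
  move=> n; rewrite /ps (bigID (fun z => z \in X)) /= maddC.
  congr MS.
    apply: eq_big => z; last by move=> /andP [_ /negbTE ->].
    case HzX: (z \in X) => /=; first by rewrite andbF.
    rewrite andbT; apply/negP => HzY; move/fsubsetP: HYX => /(_ z HzY); by rewrite HzX.
  apply: eq_big => z; first by rewrite in_fsetD.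
  by move=> /andP [_ ->].
apply: lub_unique (isum_spec _ _) _.
apply: (@slub_eq (fun n => MS (ps (fun z => z \notin X) i n) (ps (fun z => z \in X `\` Y) k n))); first by move=> n; rewrite Hps.
apply: slub_add; [exact: ps_incr | exact: ps_incr | exact: isum_spec |].
exact: (slub_ev (ps_incr _ _) (fun n Hn => ps_ev k Hn)).
Qed.


Definition Phi (G : flow_graph M) (f : nat -> M) (x : nat) : M :=
  MS (inflow G x) (\big[MS/Z0]_(y <- enum_fset (fg_X G)) fg_E G y x (f y)).

Definition contG (G : flow_graph M) := forall x y, x \in fg_X G -> chain_continuous (fg_E G x y).

Lemma is_flowE G f : is_flow G f <-> forall x, x \in fg_X G -> f x = Phi G f x.
Proof. by split => H x Hx; have := H x Hx; rewrite /Phi fsumE. Qed.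

Lemma Phi_mono G f g : contG G -> (forall x, x \in fg_X G -> le (f x) (g x)) ->
  forall x, le (Phi G f x) (Phi G g x).
Proof.
move=> Hc H x; apply: le_add; first exact: le_refl.
by apply: big_le => z Hz; apply: cont_mono; [apply: Hc | apply: H].
Qed.

Lemma big_slub (s : seq nat) (a : nat -> nat -> M) (l : nat -> M) :
  (forall z, z \in s -> incr (a z) /\ slub (a z) (l z)) ->
  incr (fun n => \big[MS/Z0]_(z <- s) a z n) /\
  slub (fun n => \big[MS/Z0]_(z <- s) a z n) (\big[MS/Z0]_(z <- s) l z).
Proof.
elim: s => [|z s IH] H.
  split; first by move=> n; rewrite !big_nil; exact: le_refl.
  rewrite big_nil; apply: (@slub_ev _ _ 0); first by move=> n; rewrite !big_nil; exact: le_refl.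
  by move=> n _; rewrite big_nil.
have [Hi Hs] := H z (mem_head _ _).
have [Hi' Hs'] := IH (fun w Hw => H w (@mem_behead _ (z :: s) w Hw)).
split.
  by move=> n; rewrite !big_cons; apply: le_add; [apply: Hi | apply: Hi'].
rewrite big_cons; apply: (@slub_eq (fun n => MS (a z n) (\big[MS/Z0]_(w <- s) a w n))).
  by move=> n; rewrite big_cons.
exact: slub_add.
Qed.

Section Kleene.
Variable G : flow_graph M.
Hypothesis Hc : contG G.

Definition iterF n := iter n (Phi G) (fun _ => Z0).

Lemma iter_incr x : incr (fun n => iterF n x).
Proof.
move=> n; elim: n x => [|n IH] x; first exact: le0.
by apply: Phi_mono => // y _; apply: IH.
Qed.

Definition LF (x : nat) : M := epsilon (inhabits Z0) (slub (fun n => iterF n x)).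

Lemma LF_spec x : slub (fun n => iterF n x) (LF x).
Proof. have [l Hl] := slub_ex (iter_incr x); exact: (epsilon_spec (inhabits Z0) _ (ex_intro _ l Hl)). Qed.

Lemma Phi_LF x : Phi G LF x = LF x.
Proof.
have [Hi Hs] := @big_slub (enum_fset (fg_X G)) (fun z n => fg_E G z x (iterF n z)) (fun z => fg_E G z x (LF z))
   (fun z Hz => conj (fun n => cont_mono (@Hc z x Hz) (iter_incr z n))
                     (slub_cont (@Hc z x Hz) (iter_incr z) (LF_spec z))).
have H1 := slub_addl (inflow G x) Hi Hs.
have H2 := slub_shift (iter_incr x) (LF_spec x).
exact: lub_unique H1 H2.
Qed.

Lemma LF_park p : (forall x, x \in fg_X G -> le (Phi G p x) (p x)) ->
  forall x, x \in fg_X G -> le (LF x) (p x).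
Proof.
move=> Hp x Hx.
have Hn : forall n x, x \in fg_X G -> le (iterF n x) (p x).
  elim=> [|n IH] y Hy; first exact: le0.
  exact: le_trans (Phi_mono Hc IH y) (Hp y Hy).
by apply: (slub_least (LF_spec x)) => n; apply: Hn.
Qed.

Lemma LF_least : is_least_flow G LF.
Proof.
split; first by apply/is_flowE => x _; rewrite Phi_LF.
move=> g /is_flowE Hg; apply: LF_park => x Hx; rewrite -Hg //; exact: le_refl.
Qed.

Lemma flow_least : is_least_flow G (flow G).
Proof. exact: (epsilon_spec (inhabits (fun _ => Z0)) _ (ex_intro _ _ LF_least)). Qed.

Lemma flow_fix x : x \in fg_X G -> flow G x = Phi G (flow G) x.
Proof. by have [/is_flowE H _] := flow_least; apply: H. Qed.

Lemma flow_park p : (forall x, x \in fg_X G -> le (Phi G p x) (p x)) ->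
  forall x, x \in fg_X G -> le (flow G x) (p x).
Proof.
move=> Hp x Hx; have [_ H] := flow_least.
exact: le_trans (H _ (proj1 LF_least) x Hx) (LF_park Hp Hx).
Qed.

Lemma flow_le g : (forall x, x \in fg_X G -> g x = Phi G g x) ->
  forall x, x \in fg_X G -> le (flow G x) (g x).
Proof. move=> Hg; have [_ H] := flow_least; apply: H; exact/is_flowE. Qed.

Lemma flow_unique q : is_least_flow G q -> forall x, x \in fg_X G -> flow G x = q x.
Proof.
move=> [Hq1 Hq2] x Hx; have [H1 H2] := flow_least.
by apply: le_antisym; [apply: H2 | apply: Hq2].
Qed.

End Kleene.


Lemma Phi_split (X Y : {fset nat}) (E E' : nat -> nat -> M -> M) (i : nat -> nat -> M) (f : nat -> M) x :
  Y `<=` X ->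
  Phi (FlowGraph X E i) f x =
  MS (inflow (FlowGraph Y E' (fun z y => if z \in X then E z y (f z) else i z y)) x)
     (\big[MS/Z0]_(z <- enum_fset Y) E z x (f z)).
Proof.
move=> HYX; rewrite /Phi /inflow /=.
rewrite (isum_split (fun z => i z x) (fun z => E z x (f z)) HYX).
rewrite (fset_big_split _ HYX).
by rewrite -!maddA [MS (\big[MS/Z0]_(z <- enum_fset Y) _) _]maddC.
Qed.

Lemma contG_sub (X Y : {fset nat}) E i i' : Y `<=` X -> contG (FlowGraph X E i) -> contG (FlowGraph Y E i').
Proof. by move=> /fsubsetP HYX Hc x y /= Hx; apply: Hc; apply: HYX. Qed.

Lemma restr_flow (X Y : {fset nat}) E i : contG (FlowGraph X E i) -> Y `<=` X ->
  forall x, x \in Y ->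
  flow (FlowGraph Y E (fun z y => if z \in X then E z y (flow (FlowGraph X E i) z) else i z y)) x
  = flow (FlowGraph X E i) x.
Proof.
move=> Hc HYX.
set G := FlowGraph X E i.
set H := FlowGraph Y E _.
have HcH : contG H by apply: contG_sub Hc.
set g := flow G.
have Hg : forall x, x \in Y -> le (flow H x) (g x).
  apply: (@flow_le H) => // x Hx.
  rewrite /g flow_fix //; last by move/fsubsetP: HYX; apply.
  by rewrite (Phi_split _ E _ _ _ HYX).
pose p := fun x => if x \in Y then flow H x else g x.
have Hp : forall x, x \in X -> le (Phi G p x) (p x).
  move=> x Hx; rewrite /p; case HxY: (x \in Y).
    rewrite (Phi_split _ E _ _ _ HYX) flow_fix // /Phi /=.
    have -> : inflow (FlowGraph Y E (fun z y => if z \in X then E z y (p z) else i z y)) x = inflow H x.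
      rewrite /inflow /=; apply: isum_ext => z /negbTE HzY.
      by rewrite /p HzY.
    have -> : \big[MS/Z0]_(z <- enum_fset Y) E z x (p z) = \big[MS/Z0]_(z <- enum_fset Y) E z x (flow H z).
      by apply: eq_big_seq => z Hz; rewrite /p Hz.
    exact: le_refl.
  rewrite /g [X in le _ X]flow_fix //.
  apply: Phi_mono => // z Hz; rewrite /p; case: ifP => HzY; first exact: Hg.
  exact: le_refl.
move=> x Hx; apply: le_antisym; first exact: Hg.
have := flow_park Hc Hp (x := x); rewrite /p Hx; apply.
by move/fsubsetP: HYX; apply.
Qed.

Lemma Phi_ext_flow (G1 G2 : flow_graph M) : fg_X G1 = fg_X G2 -> contG G1 -> contG G2 ->
  (forall f x, x \in fg_X G1 -> Phi G1 f x = Phi G2 f x) ->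
  forall x, x \in fg_X G1 -> flow G1 x = flow G2 x.
Proof.
move=> HX Hc1 Hc2 HP x Hx.
apply: (flow_unique Hc1); last by [].
have [H1 H2] := flow_least Hc2.
split.
  apply/is_flowE => y Hy; rewrite HP //; move/is_flowE: H1; apply; by rewrite -HX.
move=> g /is_flowE Hg y Hy; apply: H2; last by rewrite -HX.
by apply/is_flowE => z Hz; rewrite -HP ?HX //; apply: Hg; rewrite HX.
Qed.

Lemma flow_mono_in (X : {fset nat}) E (i i' : nat -> nat -> M) : contG (FlowGraph X E i) ->
  (forall z x, z \notin X -> x \in X -> le (i' z x) (i z x)) ->
  forall x, x \in X -> le (flow (FlowGraph X E i') x) (flow (FlowGraph X E i) x).
Proof.
move=> Hc Hi; apply: (@flow_park (FlowGraph X E i')) => // x Hx.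
rewrite [X in le _ X](flow_fix Hc) //.
apply: le_add; last exact: le_refl.
by apply: isum_mono => z Hz; apply: Hi.
Qed.

Section Key.
Variables (X Y : {fset nat}) (Ea Eb : nat -> nat -> M -> M) (i' jb : nat -> nat -> M).
Hypothesis HYX : Y `<=` X.
Hypothesis Hca : contG (FlowGraph X Ea i').
Hypothesis Hcb : contG (FlowGraph X Eb i').
Hypothesis Ez : forall z y, z \in X -> z \notin Y -> Ea z y = Eb z y.
Hypothesis Tf : forall j : nat -> nat -> M, (forall z y, z \notin Y -> y \in Y -> le (j z y) (jb z y)) ->
  forall x y, x \in Y -> y \notin Y ->
  Ea x y (flow (FlowGraph Y Ea j) x) = Eb x y (flow (FlowGraph Y Eb j) x).

Let GA := FlowGraph X Ea i'.
Let GB := FlowGraph X Eb i'.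
Let ja := fun z y => if z \in X then Ea z y (flow GA z) else i' z y.
Hypothesis Bd : forall z y, z \notin Y -> y \in Y -> le (ja z y) (jb z y).

Lemma YsubX z : z \in Y -> z \in X.
Proof. by move/fsubsetP: HYX; apply. Qed.

Lemma keyA : forall x, x \in X -> x \notin Y -> le (flow GB x) (flow GA x).
Proof.
set ga := flow GA.
set HY := FlowGraph Y Eb ja.
have HcY : contG HY by apply: contG_sub Hcb.
set m := flow HY.
pose p := fun x => if x \in Y then m x else ga x.
have Hsame : forall x, Phi GB p x = Phi HY m x.
  move=> x; rewrite (Phi_split _ Eb _ _ _ HYX) /Phi /=.
  congr MS.
    rewrite /inflow /=; apply: isum_ext => z /negbTE HzY /=.
    rewrite /ja /p HzY; case HzX: (z \in X) => //.
    by rewrite Ez // HzY.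
  by apply: eq_big_seq => z Hz; rewrite /p Hz.
have Hpf : forall x, x \in X -> p x = Phi GB p x.
  move=> x Hx; rewrite Hsame; case HxY: (x \in Y).
    by rewrite /p HxY /m flow_fix.
  rewrite /p HxY /ga flow_fix // (Phi_split _ Ea _ _ _ HYX) /Phi /=.
  congr MS.
  apply: eq_big_seq => z Hz.
  rewrite -(restr_flow Hca HYX Hz).
  by apply: Tf => //; rewrite HxY.
move=> x Hx HxY.
have := flow_le Hcb Hpf Hx.
by rewrite /p (negbTE HxY).
Qed.

Hypothesis Heq : forall x, x \in X -> x \notin Y -> flow GA x = flow GB x.

Lemma keyB : forall x y, x \in X -> y \notin X -> Ea x y (flow GA x) = Eb x y (flow GB x).
Proof.
move=> x y Hx Hy; case HxY: (x \in Y); last by rewrite Ez ?HxY // Heq ?HxY.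
rewrite -(restr_flow Hca HYX HxY) -(restr_flow Hcb HYX HxY).
have HyY : y \notin Y by apply/negP => /YsubX; rewrite (negbTE Hy).
rewrite Tf //; congr (Eb x y _).
apply: Phi_ext_flow => //=; [exact: contG_sub Hcb | exact: contG_sub Hcb |].
move=> f w Hw; rewrite /Phi /inflow /=; congr MS.
apply: isum_ext => z /negbTE HzY /=; rewrite /ja; case HzX: (z \in X) => //.
by rewrite Ez ?HzY // Heq ?HzY.
Qed.

End Key.

End Gen.

Lemma partA (M : flow_monoid) (h1 h2 : flow_graph M) :
  wf h1 -> wf h2 -> fg_X h1 = fg_X h2 -> in_eq (fg_X h1) (fg_in h1) (fg_in h2) ->
  ((exists Y, FP h1 h2 Y) <-> FP h1 h2 (fg_X h1)).
Proof.
case: h1 => X E1 in1; case: h2 => X2 E2 in2 /= Hw1 Hw2 HX Hin; subst X2.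
split; last by move=> H; exists X.
move=> [Y [HYX [[_ [HinY HtfY]] [_ [HEz _]]]]].
move: HinY HtfY HEz => /=.
set Y' := X `&` Y.
move=> HinY HtfY HEz.
have HY'X : Y' `<=` X by exact: fsubsetIl.
have Hc1 : forall i, contG (FlowGraph X E1 i) by move=> i x y Hx; apply: Hw1.
have Hc2 : forall i, contG (FlowGraph X E2 i) by move=> i x y Hx; apply: Hw2.
split; first exact: fsubset_refl.
split.
  split => //=; split.
    move=> z y; rewrite fsetIid => Hz Hy. rewrite (negbTE Hz); exact: Hin.
  rewrite /tf_eq_on /tf /outflow /= fsetIid => inf' Hinf' x y Hx Hy.
  set jb := fun z y => if z \in X then E1 z y (flow (FlowGraph X E1 in1) z) else in1 z y.
  have Hinf : forall z x, z \notin X -> x \in X -> le (inf' z x) (in1 z x).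
    by move=> z w Hz Hw; have := Hinf' z w Hz Hw; rewrite (negbTE Hz).
  have Ez : forall z y, z \in X -> z \notin Y' -> E1 z y = E2 z y.
    move=> z w Hz HzY; apply: HEz; rewrite !in_fsetI in_fsetD Hz /= andbT.
    by move: HzY; rewrite in_fsetI Hz.
  have Tf12 : forall j : nat -> nat -> M, (forall z y, z \notin Y' -> y \in Y' -> le (j z y) (jb z y)) ->
      forall x y, x \in Y' -> y \notin Y' ->
      E1 x y (flow (FlowGraph Y' E1 j) x) = E2 x y (flow (FlowGraph Y' E2 j) x).
    by move=> j Hj; apply: HtfY.
  have Tf21 : forall j : nat -> nat -> M, (forall z y, z \notin Y' -> y \in Y' -> le (j z y) (jb z y)) ->
      forall x y, x \in Y' -> y \notin Y' ->
      E2 x y (flow (FlowGraph Y' E2 j) x) = E1 x y (flow (FlowGraph Y' E1 j) x).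
    by move=> j Hj x' y' Hx' Hy'; symmetry; apply: HtfY.
  have Ez' : forall z y, z \in X -> z \notin Y' -> E2 z y = E1 z y.
    by move=> z w Hz HzY; rewrite Ez.
  have Bd1 : forall z y, z \notin Y' -> y \in Y' ->
      le ((fun z y => if z \in X then E1 z y (flow (FlowGraph X E1 inf') z) else inf' z y) z y) (jb z y).
    move=> z w HzY HwY /=; rewrite /jb; case HzX: (z \in X).
      apply: cont_mono; first by apply: Hw1.
      by apply: flow_mono_in.
    apply: Hinf; first by rewrite HzX. by move/fsubsetP: HY'X; apply.
  have Bd2 : forall z y, z \notin Y' -> y \in Y' ->
      le ((fun z y => if z \in X then E2 z y (flow (FlowGraph X E2 inf') z) else inf' z y) z y) (jb z y).
    move=> z w HzY HwY /=.
    have := HinY z w HzY HwY; rewrite /= /jb => ->.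
    case HzX: (z \in X).
      apply: cont_mono; first by apply: Hw2.
      apply: flow_mono_in => // z' x' Hz' Hx'; rewrite -Hin //; exact: Hinf.
    have HwX : w \in X by move/fsubsetP: HY'X; apply.
    rewrite -Hin ?HzX //; apply: Hinf => //; by rewrite HzX.
  have H21 := keyA HY'X (Hc1 inf') (Hc2 inf') Ez Tf12 Bd1.
  have H12 := keyA HY'X (Hc2 inf') (Hc1 inf') Ez' Tf21 Bd2.
  apply: keyB HY'X (Hc1 inf') (Hc2 inf') Ez Tf12 Bd1 _ x y Hx Hy.
  by move=> w Hw HwY; apply: le_antisym; [apply: H12 | apply: H21].
rewrite /fg_eq /in_eq /= fsetDv fsetI0; split => //.
Qed.

Section Gen2.
Variable M : flow_monoid.
Local Notation MS := (@madd M).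
Local Notation Z0 := (mzero M).

Lemma isum_ge (P : pred nat) (f : nat -> M) z : P z -> le (f z) (isum P f).
Proof.
move=> Pz; apply: le_trans (slub_ub z.+1 (isum_spec P f)).
rewrite /ps big_mkcond big_nat_recr //= Pz; exact: le_addl.
Qed.

Lemma big_enum_list (D : {fset nat}) (s : seq nat) (k : nat -> M) :
  uniq s -> (forall z, (z \in D) = (z \in s)) ->
  \big[MS/Z0]_(z <- enum_fset D) k z = \big[MS/Z0]_(z <- s) k z.
Proof.
move=> Hs HD; apply: perm_big; apply: uniq_perm; [exact: fset_uniq | exact: Hs | move=> z].
by rewrite -HD.
Qed.
End Gen2.

Definition B3 := (bool * bool * bool)%type.
Definition b3add (u v : B3) : B3 := (u.1.1 || v.1.1, u.1.2 || v.1.2, u.2 || v.2).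
Definition b0 : B3 := (false, false, false).
Definition leb3 (u v : B3) : bool := [&& u.1.1 ==> v.1.1, u.1.2 ==> v.1.2 & u.2 ==> v.2].

Lemma b3addA a b c : b3add a (b3add b c) = b3add (b3add a b) c.
Proof. by case: a b c => [[[] []] []] [[[] []] []] [[[] []] []]. Qed.
Lemma b3addC a b : b3add a b = b3add b a.
Proof. by case: a b => [[[] []] []] [[[] []] []]. Qed.
Lemma b3add0 a : b3add b0 a = a.
Proof. by case: a => [[? ?] ?]. Qed.

Lemma mleB u v : mle b3add u v <-> leb3 u v.
Proof.
split.
  by move=> [o ->]; case: u o => [[[] []] []] [[[] []] []].
move=> H; exists v; move: H; case: u v => [[[] []] []] [[[] []] []] //.
Qed.

Lemma b3_antisym a b : mle b3add a b -> mle b3add b a -> a = b.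
Proof.
move=> /mleB H1 /mleB H2; move: H1 H2.
by case: a b => [[[] []] []] [[[] []] []].
Qed.

Lemma leb3_trans a b c : leb3 a b -> leb3 b c -> leb3 a c.
Proof. by case: a b c => [[[] []] []] [[[] []] []] [[[] []] []]. Qed.

Lemma lb1 u v : leb3 u v -> u.1.1 -> v.1.1. Proof. by case: u v => [[[] []] []] [[[] []] []]. Qed.
Lemma lb2 u v : leb3 u v -> u.1.2 -> v.1.2. Proof. by case: u v => [[[] []] []] [[[] []] []]. Qed.
Lemma lb3 u v : leb3 u v -> u.2 -> v.2. Proof. by case: u v => [[[] []] []] [[[] []] []]. Qed.

Section Chain.
Variable K : B3 -> Prop.
Hypothesis HK : is_chain b3add K.

Lemma bump (p : B3 -> bool) m : (forall u v, leb3 u v -> p u -> p v) -> K m ->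
  exists m', [/\ K m', leb3 m m' & forall k, K k -> p k -> p m'].
Proof.
move=> Hp Km.
case: (classic (exists k, K k /\ p k)) => [[k [Kk pk]] | Hn].
  case: (proj2 HK m k Km Kk) => /mleB H.
    by exists k; split => // k' _ _.
  exists m; split => //; first by case: m {Km H} => [[[] []] []].
  by move=> k' _ _; apply: Hp pk.
exists m; split => //; first by case: m {Km} => [[[] []] []].
by move=> k Kk pk; exfalso; apply: Hn; exists k.
Qed.

Lemma chain_max : exists m, K m /\ forall k, K k -> leb3 k m.
Proof.
have [k0 K0] := proj1 HK.
have [m1 [K1 L1 P1]] := @bump (fun u => u.1.1) k0 (fun u v => ltac:(by case: u v => [[[] []] []] [[[] []] []])) K0.
have [m2 [K2 L2 P2]] := @bump (fun u => u.1.2) m1 (fun u v => ltac:(by case: u v => [[[] []] []] [[[] []] []])) K1.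
have [m3 [K3 L3 P3]] := @bump (fun u => u.2) m2 (fun u v => ltac:(by case: u v => [[[] []] []] [[[] []] []])) K2.
exists m3; split => // k Kk.
have H1 : k.1.1 -> m3.1.1.
  move=> /(P1 k Kk) h; exact: lb1 (leb3_trans L2 L3) h.
have H2 : k.1.2 -> m3.1.2.
  move=> /(P2 k Kk) h; exact: lb2 L3 h.
have H3 : k.2 -> m3.2 by move/(P3 k Kk).
clear -H1 H2 H3; move: H1 H2 H3; case: k m3 => [[[] []] []] [[[] []] []] //=; intuition.
Qed.

Lemma chain_lub_max l : is_lub b3add K l -> K l /\ forall k, K k -> leb3 k l.
Proof.
move=> [H1 H2]; have [m [Km Hm]] := chain_max.
have Hlm : l = m.
  apply: b3_antisym; first by apply: H2 => k /Hm /mleB.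
  exact: H1.
by subst l.
Qed.

End Chain.

Lemma b3_chain_lub K : is_chain b3add K -> exists l, is_lub b3add K l.
Proof.
move=> HK; have [m [Km Hm]] := chain_max HK.
exists m; split; first by move=> k /Hm /mleB.
by move=> u Hu; apply: Hu.
Qed.

Lemma b3_add_lub n K l : is_chain b3add K -> is_lub b3add K l ->
  is_lub b3add (img (b3add n) K) (b3add n l).
Proof.
move=> HK Hl; have [Kl Hm] := chain_lub_max HK Hl.
split.
  move=> _ [k [Kk ->]]; apply/mleB; have := Hm k Kk.
  by case: n k l {Kk Kl Hl Hm} => [[[] []] []] [[[] []] []] [[[] []] []].
by move=> u Hu; apply: Hu; exists l.
Qed.

Definition M3 : flow_monoid :=
  @FlowMonoid B3 b3add b0 b3addA b3addC b3add0 b3_antisym b3_chain_lub b3_add_lub.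


Definition a3 : B3 := (true, false, false).
Definition bb3 : B3 := (false, true, false).
Definition c3 : B3 := (false, false, true).
Definition pa (v : M3) : M3 := if v.1.1 then a3 else b0.
Definition pb (v : M3) : M3 := if v.1.1 then bb3 else b0.
Definition pc (v : M3) : M3 := if v.1.1 then c3 else b0.
Definition o1 (v : M3) : M3 := if v.1.2 && v.2 then a3 else b0.
Definition o2 (v : M3) : M3 := if [&& v.1.1, v.1.2 & v.2] then a3 else b0.
Definition zf (v : M3) : M3 := b0.

Definition Ec (x y : nat) : M3 -> M3 :=
  if (x == 2) && ((y == 1) || (y == 3)) then pa
  else if (x == 1) && (y == 2) then pb
  else if (x == 3) && (y == 2) then pc
  else zf.
Definition E1 (x y : nat) : M3 -> M3 := if (x == 2) && (y == 4) then o1 else Ec x y.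
Definition E2 (x y : nat) : M3 -> M3 := if (x == 2) && (y == 4) then o2 else Ec x y.
Definition in0 (z y : nat) : M3 := if (z == 0) && (y == 2) then a3 else b0.
Definition X0 : {fset nat} := [fset 1; 2; 3].
Definition h1 := FlowGraph X0 E1 in0.
Definition h2 := FlowGraph X0 E2 in0.

Lemma leM (u v : M3) : le u v <-> leb3 u v.
Proof. exact: mleB. Qed.

Lemma mono_cont (f : M3 -> M3) : (forall u v, leb3 u v -> leb3 (f u) (f v)) -> chain_continuous f.
Proof.
move=> Hf K l HK Hl; have [Kl Hm] := chain_lub_max HK Hl.
split; first by move=> _ [k [Kk ->]]; apply/leM; apply: Hf; apply: Hm.
by move=> u Hu; apply: Hu; exists l.
Qed.

Ltac b3case := repeat match goal with |- forall _ : B3, _ => case => [[[] []] []] end.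

Lemma Ec_cont x y : chain_continuous (Ec x y).
Proof.
rewrite /Ec; repeat case: ifP => _; apply: mono_cont; rewrite /pa /pb /pc /zf; by b3case.
Qed.
Lemma E1_cont x y : chain_continuous (E1 x y).
Proof. rewrite /E1; case: ifP => _; last exact: Ec_cont. apply: mono_cont; rewrite /o1; by b3case. Qed.
Lemma E2_cont x y : chain_continuous (E2 x y).
Proof. rewrite /E2; case: ifP => _; last exact: Ec_cont. apply: mono_cont; rewrite /o2; by b3case. Qed.

Lemma bigX0 (k : nat -> M3) : \big[@madd M3/mzero M3]_(z <- enum_fset X0) k z = b3add (k 1) (b3add (k 2) (b3add (k 3) b0)).
Proof.
rewrite (@big_enum_list M3 X0 [:: 1; 2; 3]) //; last by move=> z; rewrite /X0 !inE orbA.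
by rewrite !big_cons big_nil.
Qed.

Lemma isum_le3 (P : pred nat) (f : nat -> M3) u : (forall z, P z -> leb3 (f z) u) -> leb3 (isum P f) u.
Proof.
move=> H; apply/leM; apply: (slub_least (isum_spec P f)) => n; apply/leM.
rewrite /ps; elim/big_rec: _ => [|i x Pi Hx]; first by clear H; case: u => [[[] []] []].
have := H i Pi; move: Hx; rewrite /= /b3add; clear H.
by case: u (f i) x => [[[] []] []] [[[] []] []] [[[] []] []].
Qed.

Lemma inflow0 x : isum (fun z => z \notin X0) (fun z => in0 z x) = if x == 2 then a3 else b0.
Proof.
apply: b3_antisym; apply/mleB.
  by apply: isum_le3 => z _; rewrite /in0; case: (z == 0); case: (x == 2).
case: eqP => Hx; last by case: (isum _ _) => [[[] []] []].
have H0 : 0 \notin X0 by rewrite /X0 !inE.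
by apply/leM; have := @isum_ge M3 (fun z => z \notin X0) (fun z => in0 z x) 0 H0; rewrite /in0 Hx.
Qed.

Lemma Phi_h (E : nat -> nat -> M3 -> M3) f x :
  Phi (FlowGraph X0 E in0) f x = b3add (if x == 2 then a3 else b0) (b3add (E 1 x (f 1)) (b3add (E 2 x (f 2)) (b3add (E 3 x (f 3)) b0))).
Proof. by rewrite /Phi /inflow /= inflow0 bigX0. Qed.

Definition F0 (x : nat) : M3 := if x == 2 then (true, true, true) else if (x == 1) || (x == 3) then a3 else b0.

Lemma inX0 x : x \in X0 -> [\/ x = 1, x = 2 | x = 3].
Proof. by rewrite /X0 !inE => /orP [/orP [] | ] /eqP ->; constructor. Qed.

Lemma mem1 : 1 \in X0. Proof. by rewrite /X0 !inE. Qed.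
Lemma mem2 : 2 \in X0. Proof. by rewrite /X0 !inE. Qed.
Lemma mem3 : 3 \in X0. Proof. by rewrite /X0 !inE. Qed.

Lemma flowF (E : nat -> nat -> M3 -> M3) : E = E1 \/ E = E2 ->
  forall x, x \in X0 -> flow (FlowGraph X0 E in0) x = F0 x.
Proof.
move=> HE x0 Hx0.
have Hc : contG (FlowGraph X0 E in0).
  by move=> x y Hx; case: HE => ->; [exact: E1_cont | exact: E2_cont].
apply: (flow_unique Hc _ Hx0).
split.
  apply/is_flowE => x /inX0 [] ->; rewrite Phi_h; by case: HE => ->.
move=> g /is_flowE Hg.
have H1 := Hg 1 (mem1 : 1 \in X0); have H2 := Hg 2 (mem2 : 2 \in X0); have H3 := Hg 3 (mem3 : 3 \in X0).
rewrite !Phi_h in H1 H2 H3.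
move=> x /inX0 Hx; apply/leM.
case: HE => HE; subst E; move: H1 H2 H3; rewrite /E1 /E2 /Ec /=;
 case: Hx => ->; case: (g 1) (g 2) (g 3) => [[[] []] []] [[[] []] []] [[[] []] []]; by [].
Qed.

Definition Y1 : {fset nat} := [fset 1; 2].
Definition Y2 : {fset nat} := [fset 2; 3].

Lemma bigY1 (k : nat -> M3) : \big[@madd M3/mzero M3]_(z <- enum_fset Y1) k z = b3add (k 1) (b3add (k 2) b0).
Proof.
rewrite (@big_enum_list M3 Y1 [:: 1; 2]) //; last by move=> z; rewrite /Y1 !inE.
by rewrite !big_cons big_nil.
Qed.

Lemma inY1 x : x \in Y1 -> x = 1 \/ x = 2.
Proof. by rewrite /Y1 !inE => /orP [] /eqP ->; [left | right]. Qed.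

Lemma Phi_Y1 (E : nat -> nat -> M3 -> M3) i f x :
  Phi (FlowGraph Y1 E i) f x = b3add (isum (fun z => z \notin Y1) (fun z => i z x)) (b3add (E 1 x (f 1)) (b3add (E 2 x (f 2)) b0)).
Proof. by rewrite /Phi /inflow /= bigY1. Qed.

Definition qY1 (v : B3) (x : nat) : M3 := if x == 1 then pa v else if x == 2 then b3add v (pb v) else b0.

Lemma ctxY1 (inf' : nat -> nat -> M3) :
  (forall z, z \notin Y1 -> inf' z 1 = b0) ->
  (forall z, z \notin Y1 -> leb3 (inf' z 2) (true, false, true)) ->
  forall x y, x \in Y1 -> y \notin Y1 ->
  E1 x y (flow (FlowGraph Y1 E1 inf') x) = E2 x y (flow (FlowGraph Y1 E2 inf') x).
Proof.
move=> Hb1 Hb2.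
set i1 := isum (fun z => z \notin Y1) (fun z => inf' z 1).
set i2 := isum (fun z => z \notin Y1) (fun z => inf' z 2).
have Hi1 : i1 = b0.
  apply: b3_antisym; apply/mleB; last by case: i1 => [[[] []] []].
  by apply: isum_le3 => z Hz; rewrite Hb1.
have Hi2 : leb3 i2 (true, false, true) by apply: isum_le3.
have Hin : forall x, x \in Y1 -> isum (fun z => z \notin Y1) (fun z => inf' z x) = if x == 1 then b0 else i2.
  by move=> x /inY1 [] ->.
clearbody i2.
have Hq : forall E, E = E1 \/ E = E2 -> forall x, x \in Y1 -> flow (FlowGraph Y1 E inf') x = qY1 i2 x.
  move=> E HE x0 Hx0.
  have Hc : contG (FlowGraph Y1 E inf').
    by move=> x y Hx; case: HE => ->; [exact: E1_cont | exact: E2_cont].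
  apply: (flow_unique Hc _ Hx0).
  have m1 : 1 \in Y1 by rewrite /Y1 !inE.
  have m2 : 2 \in Y1 by rewrite /Y1 !inE.
  split.
    apply/is_flowE => x Hx; rewrite Phi_Y1 Hin //; move/inY1: Hx => [] ->;
    case: HE => ->; rewrite /qY1 /E1 /E2 /Ec /=; move: Hi2; clear Hin;
    by case: i2 => [[[] []] []].
  move=> g /is_flowE Hg.
  have H1 := Hg 1 m1; have H2 := Hg 2 m2.
  rewrite !Phi_Y1 !Hin // in H1 H2.
  move=> x /inY1 Hx; apply/leM.
  case: HE => HE; subst E; move: H1 H2 Hi2; clear Hin; rewrite /qY1 /E1 /E2 /Ec /=;
   case: Hx => ->; case: (g 1) (g 2) i2 => [[[] []] []] [[[] []] []] [[[] []] []]; by [].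
move=> x y Hx Hy.
rewrite (Hq E1) ?(Hq E2); [|by right|by []|by left|by []].
have Hy4 : (x == 2) && (y == 4) || ~~ ((x == 2) && (y == 4)) by case: (_ && _).
case/orP: Hy4 => Hxy.
  move/andP: Hxy => [/eqP -> /eqP ->]; rewrite /E1 /E2 /= /qY1 /=.
  by move: Hi2; clear Hin Hq; case: i2 => [[[] []] []].
by rewrite /E1 /E2 (negbTE Hxy).
Qed.

Lemma bigY2 (k : nat -> M3) : \big[@madd M3/mzero M3]_(z <- enum_fset Y2) k z = b3add (k 2) (b3add (k 3) b0).
Proof.
rewrite (@big_enum_list M3 Y2 [:: 2; 3]) //; last by move=> z; rewrite /Y2 !inE.
by rewrite !big_cons big_nil.
Qed.

Lemma inY2 x : x \in Y2 -> x = 3 \/ x = 2.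
Proof. by rewrite /Y2 !inE => /orP [] /eqP ->; [right | left]. Qed.

Lemma Phi_Y2 (E : nat -> nat -> M3 -> M3) i f x :
  Phi (FlowGraph Y2 E i) f x = b3add (isum (fun z => z \notin Y2) (fun z => i z x)) (b3add (E 2 x (f 2)) (b3add (E 3 x (f 3)) b0)).
Proof. by rewrite /Phi /inflow /= bigY2. Qed.

Definition qY2 (v : B3) (x : nat) : M3 := if x == 3 then pa v else if x == 2 then b3add v (pc v) else b0.

Lemma ctxY2 (inf' : nat -> nat -> M3) :
  (forall z, z \notin Y2 -> inf' z 3 = b0) ->
  (forall z, z \notin Y2 -> leb3 (inf' z 2) (true, true, false)) ->
  forall x y, x \in Y2 -> y \notin Y2 ->
  E1 x y (flow (FlowGraph Y2 E1 inf') x) = E2 x y (flow (FlowGraph Y2 E2 inf') x).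
Proof.
move=> Hb1 Hb2.
set i1 := isum (fun z => z \notin Y2) (fun z => inf' z 3).
set i2 := isum (fun z => z \notin Y2) (fun z => inf' z 2).
have Hi1 : i1 = b0.
  apply: b3_antisym; apply/mleB; last by case: i1 => [[[] []] []].
  by apply: isum_le3 => z Hz; rewrite Hb1.
have Hi2 : leb3 i2 (true, true, false) by apply: isum_le3.
have Hin : forall x, x \in Y2 -> isum (fun z => z \notin Y2) (fun z => inf' z x) = if x == 3 then b0 else i2.
  by move=> x /inY2 [] ->.
clearbody i2.
have Hq : forall E, E = E1 \/ E = E2 -> forall x, x \in Y2 -> flow (FlowGraph Y2 E inf') x = qY2 i2 x.
  move=> E HE x0 Hx0.
  have Hc : contG (FlowGraph Y2 E inf').
    by move=> x y Hx; case: HE => ->; [exact: E1_cont | exact: E2_cont].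
  apply: (flow_unique Hc _ Hx0).
  have m1 : 3 \in Y2 by rewrite /Y2 !inE.
  have m2 : 2 \in Y2 by rewrite /Y2 !inE.
  split.
    apply/is_flowE => x Hx; rewrite Phi_Y2 Hin //; move/inY2: Hx => [] ->;
    case: HE => ->; rewrite /qY2 /E1 /E2 /Ec /=; move: Hi2; clear Hin;
    by case: i2 => [[[] []] []].
  move=> g /is_flowE Hg.
  have H1 := Hg 3 m1; have H2 := Hg 2 m2.
  rewrite !Phi_Y2 !Hin // in H1 H2.
  move=> x /inY2 Hx; apply/leM.
  case: HE => HE; subst E; move: H1 H2 Hi2; clear Hin; rewrite /qY2 /E1 /E2 /Ec /=;
   case: Hx => ->; case: (g 3) (g 2) i2 => [[[] []] []] [[[] []] []] [[[] []] []]; by [].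
move=> x y Hx Hy.
rewrite (Hq E1) ?(Hq E2); [|by right|by []|by left|by []].
have Hy4 : (x == 2) && (y == 4) || ~~ ((x == 2) && (y == 4)) by case: (_ && _).
case/orP: Hy4 => Hxy.
  move/andP: Hxy => [/eqP -> /eqP ->]; rewrite /E1 /E2 /= /qY2 /=.
  by move: Hi2; clear Hin Hq; case: i2 => [[[] []] []].
by rewrite /E1 /E2 (negbTE Hxy).
Qed.

Lemma n12 : (1 == 2) = false. Proof. by []. Qed.
Lemma n22 : (2 == 2) = true. Proof. by []. Qed.
Lemma n24 : (2 == 4) = false. Proof. by []. Qed.
Lemma n32 : (3 == 2) = false. Proof. by []. Qed.
Lemma n34 : (3 == 4) = false. Proof. by []. Qed.
Lemma n14 : (1 == 4) = false. Proof. by []. Qed.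

Lemma E12y x y : y != 4 -> E1 x y = E2 x y.
Proof. by move=> H; rewrite /E1 /E2 (negbTE H) andbF. Qed.
Lemma E12x x y : x != 2 -> E1 x y = E2 x y.
Proof. by move=> H; rewrite /E1 /E2 (negbTE H). Qed.

Lemma flow12 z : z \in X0 -> flow h1 z = flow h2 z.
Proof. by move=> Hz; rewrite /h1 /h2 !flowF //; [right | left]. Qed.

Lemma in_eq_restr Y : in_eq (X0 `&` Y) (fg_in (restrict h1 Y)) (fg_in (restrict h2 Y)).
Proof.
move=> z y Hz; rewrite in_fsetI => /andP [Hy _] /=.
case: ifP => HzX //; rewrite flow12 // E12y //.
by apply/eqP => H4; move: Hy; rewrite H4 /X0 !inE.
Qed.

Lemma Y1sub : Y1 `<=` X0.
Proof. by apply/fsubsetP => z; rewrite /Y1 /X0 !inE => /orP [] ->; rewrite ?orbT. Qed.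
Lemma Y2sub : Y2 `<=` X0.
Proof. by apply/fsubsetP => z; rewrite /Y2 /X0 !inE => /orP [] ->; rewrite ?orbT. Qed.

Lemma FP_Y1 : FP h1 h2 Y1.
Proof.
split; first exact: Y1sub.
split.
  split => //; split; first exact: in_eq_restr.
  rewrite /tf_eq_on /tf /outflow /=.
  have -> : X0 `&` Y1 = Y1 by apply/fsetIidPr; exact: Y1sub.
  move=> inf' Hinf x y Hx Hy; apply: ctxY1 => // z Hz;
   move: (Hz); rewrite /Y1 !inE negb_or => /andP [Hz1 Hz2].
    have := Hinf z 1 Hz; rewrite /Y1 !inE eqxx => /(_ isT) /leM.
    rewrite /E1 /Ec /= (negbTE Hz2) /= /in0 /= !n12 !andbF /zf.
    by case: ifP => _; case: (inf' z 1) => [[[] []] []].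
  have := Hinf z 2 Hz; rewrite /Y1 !inE eqxx orbT => /(_ isT) /leM.
  rewrite /E1 /Ec /= (negbTE Hz2) (negbTE Hz1) /= /in0 /= ?n22 ?andbT ?n24 ?andbF /pc /zf.
  case: (z \in X0); case: (z == 3); case: (z == 0); case: (flow h1 z) => [[[] []] []];
   by case: (inf' z 2) => [[[] []] []].
rewrite /fg_eq /=; split => //; split; last exact: in_eq_restr.
move=> x y; rewrite !in_fsetI in_fsetD => /andP [_ /andP [Hx _]].
apply: E12x; apply/eqP => H2; move: Hx; by rewrite H2 /Y1 !inE.
Qed.

Lemma FP_Y2 : FP h1 h2 Y2.
Proof.
split; first exact: Y2sub.
split.
  split => //; split; first exact: in_eq_restr.
  rewrite /tf_eq_on /tf /outflow /=.
  have -> : X0 `&` Y2 = Y2 by apply/fsetIidPr; exact: Y2sub.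
  move=> inf' Hinf x y Hx Hy; apply: ctxY2 => // z Hz;
   move: (Hz); rewrite /Y2 !inE negb_or => /andP [Hz2 Hz3].
    have := Hinf z 3 Hz; rewrite /Y2 !inE eqxx orbT => /(_ isT) /leM.
    rewrite /E1 /Ec /= (negbTE Hz2) (negbTE Hz3) /= /in0 /= ?n32 ?andbF /zf.
    by case: ifP => _; case: (inf' z 3) => [[[] []] []].
  have := Hinf z 2 Hz; rewrite /Y2 !inE eqxx => /(_ isT) /leM.
  rewrite /E1 /Ec /= (negbTE Hz2) (negbTE Hz3) /= /in0 /= ?n22 ?andbT ?n24 ?andbF /pb /zf.
  case: (z \in X0); case: (z == 1); case: (z == 0); case: (flow h1 z) => [[[] []] []];
   by case: (inf' z 2) => [[[] []] []].
rewrite /fg_eq /=; split => //; split; last exact: in_eq_restr.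
move=> x y; rewrite !in_fsetI in_fsetD => /andP [_ /andP [Hx _]].
apply: E12x; apply/eqP => H2; move: Hx; by rewrite H2 /Y2 !inE.
Qed.

Lemma S2 : X0 `&` (Y1 `&` Y2) = [fset 2].
Proof. by apply/fsetP => z; rewrite /X0 /Y1 /Y2 !inE; case: z => [|[|[|[|z]]]]. Qed.

Definition infb (z y : nat) : M3 :=
  if (z == 1) && (y == 2) then bb3 else if (z == 3) && (y == 2) then c3 else b0.

Lemma flow_S (E : nat -> nat -> M3 -> M3) : E = E1 \/ E = E2 ->
  flow (FlowGraph [fset 2] E infb) 2 = (false, true, true).
Proof.
move=> HE.
have Hc : contG (FlowGraph [fset 2] E infb).
  by move=> x y Hx; case: HE => ->; [exact: E1_cont | exact: E2_cont].
have m2 : 2 \in [fset 2] by rewrite !inE.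
have Hi : isum (fun z => z \notin [fset 2]) (fun z => infb z 2) = (false, true, true).
  apply: b3_antisym; apply/mleB.
    by apply: isum_le3 => z _; rewrite /infb; case: (z == 1); case: (z == 3).
  have n1 : 1 \notin [fset 2] by rewrite !inE.
  have n3 : 3 \notin [fset 2] by rewrite !inE.
  have := @isum_ge M3 (fun z => z \notin [fset 2]) (fun z => infb z 2) 1 n1.
  have := @isum_ge M3 (fun z => z \notin [fset 2]) (fun z => infb z 2) 3 n3.
  rewrite /infb /= => /leM + /leM.
  by case: (isum _ _) => [[[] []] []].
have HB : forall k : nat -> M3, \big[@madd M3/mzero M3]_(z <- enum_fset [fset 2]) k z = b3add (k 2) b0.
  move=> k; rewrite (@big_enum_list M3 [fset 2] [:: 2]) //; last by move=> z; rewrite !inE.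
  by rewrite big_cons big_nil.
apply: (@flow_unique M3 _ Hc (fun _ => (false, true, true)) _ 2 m2).
split.
  apply/is_flowE => x; rewrite !inE => /eqP ->.
  rewrite /Phi /inflow /= HB Hi; by case: HE => ->.
move=> g /is_flowE Hg x; rewrite !inE => /eqP ->.
have := Hg 2 m2; rewrite /Phi /inflow /= HB Hi => ->; apply/leM.
by case: HE => ->; case: (g 2) => [[[] []] []].
Qed.

Lemma notFP : ~ FP h1 h2 (Y1 `&` Y2).
Proof.
move=> [_ [[_ [_ Htf]] _]].
move: Htf; rewrite /tf_eq_on /tf /outflow /= S2 => Htf.
have Hb : forall y x, y \notin [fset 2] -> x \in [fset 2] ->
    le (infb y x) (if y \in X0 then E1 y x (flow h1 y) else in0 y x).
  move=> y x Hy; rewrite !inE => /eqP ->; apply/leM.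
  rewrite /infb ?n22 ?andbT; case: (y =P 1) => [->|H1].
    by rewrite /= (flowF (or_introl erefl) mem1).
  case: (y =P 3) => [->|H3].
    by rewrite /= (flowF (or_introl erefl) mem3).
  by case: (if _ then _ else _) => [[[] []] []].
have := Htf infb Hb 2 4; rewrite !inE => /(_ isT isT).
by rewrite (flow_S (or_introl erefl)) (flow_S (or_intror erefl)).
Qed.

Theorem proposition1 :
  (forall (M : flow_monoid) (h1 h2 : flow_graph M),
      wf h1 -> wf h2 ->
      fg_X h1 = fg_X h2 -> in_eq (fg_X h1) (fg_in h1) (fg_in h2) ->
      ((exists Y, FP h1 h2 Y) <-> FP h1 h2 (fg_X h1)))
  /\
  (exists (M : flow_monoid) (h1 h2 : flow_graph M),
      wf h1 /\ wf h2 /\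
      fg_X h1 = fg_X h2 /\ in_eq (fg_X h1) (fg_in h1) (fg_in h2) /\
      exists Y1 Y2 : {fset nat},
        FP h1 h2 Y1 /\ FP h1 h2 Y2 /\ ~ FP h1 h2 (Y1 `&` Y2)).
Proof.
split; first exact: partA.
exists M3, h1, h2; split; first by move=> x y _; exact: E1_cont.
split; first by move=> x y _; exact: E2_cont.
split => //; split => //.
exists Y1, Y2; split; first exact: FP_Y1.
split; first exact: FP_Y2.
exact: notFP.
Qed.
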